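(* Let $V=\{1,\dots,n\}$ and let $Q=(q_{ij})_{i,j=1}^n$ be a symmetric matrix with $0\le q_{ij}\le 1$. Let $G$ be the inhomogeneous random graph on $V$ obtained by joining each pair $\{i,j\}$ independently with probability $q_{ij}$. Let $S\subseteq V$ with $|S|=m$, and let $G(S)$ be the union of the connected components of $G$ that intersect $S$. Let $0<\gamma<1$. (a) If $\sum_{j\in V\setminus S} q_{ij}\le\gamma$ for all nodes $i\in V$, then $\mathbb E[|G(S)|]\le \frac{1}{1-\gamma}\,m$. (b) If $q_{ij}=\gamma/n$ for all $i\neq j$ with $i\in V\setminus S$, then $\mathbb E[|G(S)|]\ge \frac{n+\gamma n}{n+\gamma m}\,m$.
   Context: $|G(S)|$ denotes the number of nodes of $G(S)$. *)

(* Defs.v *)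
From mathcomp Require Import all_boot all_order all_algebra.
Set Implicit Arguments. Unset Strict Implicit. Unset Printing Implicit Defensive.
Import Order.TTheory GRing.Theory Num.Theory.
Local Open Scope ring_scope.

Section RandomGraph.
Variables (R : realFieldType) (n : nat).

(* unordered pairs {i,j}, i<>j, represented as (i,j) with i < j *)
Definition vpairs : {set 'I_n * 'I_n} := [set p : 'I_n * 'I_n | (val p.1 < val p.2)%N].

Definition graph_prob (Q : 'M[R]_n) (E : {set 'I_n * 'I_n}) : R :=
  \prod_(p in vpairs) (if p \in E then Q p.1 p.2 else 1 - Q p.1 p.2).

Definition adj (E : {set 'I_n * 'I_n}) : rel 'I_n :=
  fun i j => ((i, j) \in E) || ((j, i) \in E).

Definition GS (E : {set 'I_n * 'I_n}) (S : {set 'I_n}) : {set 'I_n} :=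
  [set v | [exists s in S, connect (adj E) s v]].

Definition expected_GS (Q : 'M[R]_n) (S : {set 'I_n}) : R :=
  \sum_(E : {set 'I_n * 'I_n} | E \subset vpairs) graph_prob Q E * (#|GS E S|)%:R.

End RandomGraph.

(* Main.v *)
Require Import Defs.
From mathcomp Require Import all_boot all_order all_algebra ring lra.
Import Order.TTheory GRing.Theory Num.Theory.
Local Open Scope ring_scope.
Set Implicit Arguments. Unset Strict Implicit.
Lemma sum_subsets (R : comNzRingType) (T : finType) (P : {set T}) (a b : T -> R) :
  \sum_(E : {set T} | E \subset P) \prod_(p in P) (if p \in E then a p else b p)
  = \prod_(p in P) (a p + b p).
Proof.
pose F i (j : bool) := if i \in P then (if j then a i else b i) else (if j then 0 else 1 : R).
have := @bigA_distr_bigA R 0 1 *%R +%R T bool F.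
have -> : \prod_i \sum_(j : bool) F i j = \prod_(p in P) (a p + b p).
  rewrite [RHS]big_mkcond; apply: eq_bigr => i _; rewrite big_bool /F.
  case: (i \in P) => //=; exact: add0r.
move=> ->.
pose h (E : {set T}) : {ffun T -> bool} := [ffun i => i \in E].
have hb : bijective h.
  exists (fun f : {ffun T -> bool} => [set i | f i]).
    by move=> E; apply/setP=> i; rewrite inE /h ffunE.
  by move=> f; apply/ffunP=> i; rewrite /h ffunE inE.
rewrite (reindex h) /=; last by apply: onW_bij.
rewrite [LHS]big_mkcond; apply: eq_bigr => E _.
case: ifP => sub.
  rewrite [LHS]big_mkcond; apply: eq_bigr => i _; rewrite /F /h ffunE.
  case: ifP => // iP; case: ifP => // iE.
  by move/subsetP: sub => /(_ i iE); rewrite iP.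
have [i iE iP] : exists2 i, i \in E & i \notin P.
  move/negbT: sub => /subsetPn [i iE iP]; by exists i.
rewrite (bigD1 i) //= /F /h ffunE iE (negbTE iP) mul0r //.
Qed.

Notation pr n := ('I_n * 'I_n)%type.

Lemma gp_ge0 (R : realFieldType) n (Q : 'M[R]_n) E :
  (forall i j, 0 <= Q i j <= 1) -> 0 <= graph_prob Q E.
Proof.
move=> hQ; apply: prodr_ge0 => p _; case: ifP => _; have /andP[h1 h2] := hQ p.1 p.2 => //.
by rewrite subr_ge0.
Qed.

Lemma sum_present (R : realFieldType) n (Q : 'M[R]_n) (A : {set pr n}) :
  A \subset vpairs n ->
  \sum_(E : {set pr n} | E \subset vpairs n) graph_prob Q E * (A \subset E)%:R
  = \prod_(p in A) Q p.1 p.2.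
Proof.
move=> Av.
have := sum_subsets (vpairs n) (fun p => Q p.1 p.2)
   (fun p => if p \in A then 0 else 1 - Q p.1 p.2).
have -> : \prod_(p in vpairs n) (Q p.1 p.2 + (if p \in A then 0 else 1 - Q p.1 p.2))
          = \prod_(p in A) Q p.1 p.2.
  rewrite (big_setID A) /= (setIidPr Av) [X in _ * X]big1 ?mulr1.
    by apply: eq_bigr => p ->; rewrite addr0.
  by move=> p /setDP [_ /negbTE ->]; rewrite addrC subrK.
move=> <-; apply: eq_bigr => E Ev; rewrite /graph_prob.
case: (boolP (A \subset E)) => AE.
  rewrite mulr1; apply: eq_bigr => p pv; case: ifP => // pE.
  by case: ifP => // pA; move/subsetP: AE => /(_ p pA); rewrite pE.
have [p pA pE] : exists2 p, p \in A & p \notin E.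
  by move/subsetPn: AE => [p pA pE]; exists p.
rewrite mulr0 (bigD1 p) /=; last by move/subsetP: Av; apply.
by rewrite (negbTE pE) pA mul0r.
Qed.

Lemma sum_absent (R : realFieldType) n (Q : 'M[R]_n) (B : {set pr n}) :
  \sum_(E : {set pr n} | E \subset vpairs n) graph_prob Q E * (B :&: E == set0)%:R
  = \prod_(p in vpairs n) (if p \in B then 1 - Q p.1 p.2 else 1).
Proof.
have := sum_subsets (vpairs n) (fun p => if p \in B then 0 else Q p.1 p.2)
   (fun p => 1 - Q p.1 p.2).
have -> : \prod_(p in vpairs n) ((if p \in B then 0 else Q p.1 p.2) + (1 - Q p.1 p.2))
          = \prod_(p in vpairs n) (if p \in B then 1 - Q p.1 p.2 else 1).
  by apply: eq_bigr => p _; case: ifP; rewrite ?add0r // addrC subrK.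
move=> <-; apply: eq_bigr => E Ev; rewrite /graph_prob.
case: (boolP (B :&: E == set0)) => BE.
  rewrite mulr1; apply: eq_bigr => p pv; case: ifP => // pE.
  case: ifP => // pB; move/eqP: BE => /setP /(_ p); by rewrite inE pB pE inE.
have [p pB pE] : exists2 p, p \in B & p \in E.
  move/set0Pn: BE => [p]; rewrite inE => /andP[]; by exists p.
rewrite mulr0 (bigD1 p) /=; last by move/subsetP: Ev; apply.
by rewrite pE pB mul0r.
Qed.

Lemma sum_gp (R : realFieldType) n (Q : 'M[R]_n) :
  \sum_(E : {set pr n} | E \subset vpairs n) graph_prob Q E = 1.
Proof.
have h := sum_absent Q set0.
have e : \prod_(p in vpairs n) (if p \in (set0 : {set pr n}) then 1 - Q p.1 p.2 else 1) = 1.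
  by rewrite big1 // => p _; rewrite in_set0.
rewrite e in h; rewrite -[RHS]h; apply: eq_bigr => E _; by rewrite set0I eqxx mulr1.
Qed.
Definition oe n (i j : 'I_n) : pr n := if (val i < val j)%N then (i, j) else (j, i).

Lemma adj_oe n (E : {set pr n}) i j : E \subset vpairs n -> adj E i j = (oe i j \in E).
Proof.
move=> /subsetP Ev; rewrite /adj /oe.
case: (ltngtP (val i) (val j)) => h.
- case: (boolP ((j, i) \in E)) => [/Ev|]; first by rewrite inE /= ltnNge ltnW.
  by rewrite orbF.
- case: (boolP ((i, j) \in E)) => [/Ev|]; first by rewrite inE /= ltnNge ltnW.
  by rewrite orFb.
- have e : i = j by apply: val_inj.
  subst j; rewrite orbb.
  by case: (boolP ((i, i) \in E)) => [/Ev|]; first by rewrite inE /= ltnn.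
Qed.

Lemma path_adj n (E : {set pr n}) x t : E \subset vpairs n ->
  path (adj E) x t = all (fun p => p \in E) (pairmap (@oe n) x t).
Proof.
move=> Ev; elim: t x => [|y t IH] x //=.
by rewrite IH adj_oe.
Qed.

Lemma oe_vpairs n (x y : 'I_n) : x != y -> oe x y \in vpairs n.
Proof.
move=> xy; rewrite /oe; case: ltngtP => h; rewrite inE /= ?h //.
by move: xy; rewrite -(inj_eq val_inj) h eqxx.
Qed.

Lemma mem_oe n (x y : 'I_n) p : p = oe x y -> (p.1 == x) || (p.2 == x).
Proof. by move=> ->; rewrite /oe; case: ifP => _ /=; rewrite eqxx ?orbT. Qed.

Lemma pairmap_mem n (y : 'I_n) t p : p \in pairmap (@oe n) y t ->
  (p.1 \in y :: t) && (p.2 \in y :: t).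
Proof.
elim: t y => [|z t IH] y //=; rewrite inE => /orP [/eqP ->|/IH].
  by rewrite /oe; case: ifP => _ /=; rewrite !inE !eqxx ?orbT.
by move=> /andP [h1 h2]; rewrite !inE in h1 h2 *; rewrite h1 h2 !orbT.
Qed.

Lemma uniq_pairmap n (x : 'I_n) t : uniq (x :: t) -> uniq (pairmap (@oe n) x t).
Proof.
elim: t x => [|y t IH] x //= /andP [xn /andP [yn ut]].
rewrite IH; last by rewrite /= yn ut.
rewrite andbT; apply/negP => /pairmap_mem /andP [h1 h2].
have := mem_oe (erefl (oe x y)) => /orP [] /eqP e.
  by rewrite e (negbTE xn) in h1.
by rewrite e (negbTE xn) in h2.
Qed.

Lemma pairmap_vpairs n (x : 'I_n) t : uniq (x :: t) ->
  {subset pairmap (@oe n) x t <= vpairs n}.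
Proof.
elim: t x => [|y t IH] x //= /andP [xn /andP [yn ut]] p.
rewrite inE => /orP [/eqP ->|]; last by apply: IH; rewrite /= yn.
apply: oe_vpairs; apply: contra xn => /eqP ->; by rewrite mem_head.
Qed.

Lemma Q_oe (R : realFieldType) n (Q : 'M[R]_n) x y : Q^T = Q ->
  Q (oe x y).1 (oe x y).2 = Q x y.
Proof.
move=> QT; rewrite /oe; case: ifP => //= _.
by rewrite -[in RHS]QT mxE.
Qed.

Definition W (R : realFieldType) n (Q : 'M[R]_n) (x : 'I_n) t :=
  \prod_(p <- pairmap (@oe n) x t) Q p.1 p.2.

Lemma W_cons (R : realFieldType) n (Q : 'M[R]_n) x y t : Q^T = Q ->
  W Q x (y :: t) = Q x y * W Q y t.
Proof. by move=> QT; rewrite /W /= big_cons Q_oe. Qed.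

Lemma W_ge0 (R : realFieldType) n (Q : 'M[R]_n) x t :
  (forall i j, 0 <= Q i j <= 1) -> 0 <= W Q x t.
Proof. by move=> hQ; apply: prodr_ge0 => p _; case/andP: (hQ p.1 p.2). Qed.

Lemma exp_path (R : realFieldType) n (Q : 'M[R]_n) x t : uniq (x :: t) ->
  \sum_(E : {set pr n} | E \subset vpairs n) graph_prob Q E * (path (adj E) x t)%:R
  = W Q x t.
Proof.
move=> ux.
pose A := [set p | p \in pairmap (@oe n) x t].
have Av : A \subset vpairs n.
  by apply/subsetP => p; rewrite inE; apply: pairmap_vpairs.
rewrite -[RHS](_ : \prod_(p in A) Q p.1 p.2 = _); last first.
  rewrite /W big_uniq; last exact: uniq_pairmap.
  by apply: eq_bigl => p; rewrite inE.
rewrite -(sum_present Q Av); apply: eq_bigr => E Ev.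
rewrite path_adj //; congr (_ * (_ %:R)).
case: (boolP (all _ _)) => [/allP h|/allP h]; case: (boolP (A \subset E)) => [/subsetP h'|/subsetP h'] //.
  by case: h' => p; rewrite inE => /h.
by case: h => p pin; apply: h'; rewrite inE.
Qed.

Fixpoint allseq n k : seq (seq 'I_n) :=
  if k is k'.+1 then flatten [seq [seq y :: t | t <- allseq n k'] | y <- enum 'I_n]
  else [:: [::]].

Lemma mem_allseq n (t : seq 'I_n) : t \in allseq n (size t).
Proof.
elim: t => [|y t IH] /=; first by rewrite mem_seq1.
apply/flatten_mapP; exists y; first by rewrite mem_enum.
by apply: map_f.
Qed.

Lemma sum_allseq (R : realFieldType) n k (F : seq 'I_n -> R) :
  \sum_(t <- allseq n k.+1) F t = \sum_(y : 'I_n) \sum_(t <- allseq n k) F (y :: t).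
Proof.
rewrite /= big_flatten big_map big_enum; apply: eq_bigr => y _.
by rewrite big_map.
Qed.

Lemma walk_bound (R : realFieldType) n (Q : 'M[R]_n) (S : {set 'I_n}) g :
  (forall i j, 0 <= Q i j <= 1) -> Q^T = Q -> 0 <= g ->
  (forall i, \sum_(j in ~: S) Q i j <= g) ->
  forall k x, \sum_(t <- allseq n k) (all (fun v => v \notin S) t)%:R * W Q x t <= g ^+ k.
Proof.
move=> hQ QT g0 hS; elim=> [|k IH] x.
  by rewrite /= big_seq1 /W big_nil mulr1.
rewrite sum_allseq.
apply: le_trans (_ : \sum_(y in ~: S) Q x y * g ^+ k <= _); last first.
  rewrite -mulr_suml exprSr [X in _ <= X]mulrC.
  by apply: ler_wpM2r; [exact: exprn_ge0 | exact: hS].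
rewrite [X in _ <= X]big_mkcond /=; apply: ler_sum => y _.
under eq_bigr => t _ do rewrite W_cons //.
rewrite inE; case: (boolP (y \notin S)) => yS /=.
  have -> : \sum_(t <- allseq n k) (all (fun v => v \notin S) t)%:R * (Q x y * W Q y t)
     = Q x y * \sum_(t <- allseq n k) (all (fun v => v \notin S) t)%:R * W Q y t.
    by rewrite mulr_sumr; apply: eq_bigr => t _; rewrite mulrCA.
  by apply: ler_wpM2l; [case/andP: (hQ x y) | exact: IH].
by rewrite big1 // => t _; rewrite mul0r.
Qed.

Lemma last_S (T : eqType) (e : rel T) (P : pred T) p x :
  path e x p -> uniq (x :: p) -> has P (x :: p) ->
  exists s t, [/\ P s, path e s t, uniq (s :: t), all (fun y => ~~ P y) t
                & last s t = last x p].
Proof.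
elim: p x => [|y p IH] x /=.
  by move=> _ _; rewrite orbF => Px; exists x, [::]; split.
move=> /andP [exy pth] /andP [xn /andP [yn up]].
case: (boolP (has P (y :: p))) => h.
  move=> _; have [s [t [Ps ps us al ls]]] := IH y pth (introT andP (conj yn up)) h.
  by exists s, t; split.
move: (h); rewrite /= => /norP [Py hp]; rewrite (negbTE Py) (negbTE hp) orbF => Px.
exists x, (y :: p); split => //=.
- by rewrite orbF in Px.
- by rewrite exy.
- by rewrite xn yn.
rewrite Py /=; move: hp; rewrite -all_predC; exact.
Qed.

Definition good n (E : {set pr n}) (S : {set 'I_n}) s t :=
  [&& uniq (s :: t), all (fun v => v \notin S) t & path (adj E) s t].

Lemma count_GS n (E : {set pr n}) (S : {set 'I_n}) :
  (#|GS E S| <= #|S| + \sum_(s in S) \sum_(k < n)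
     \sum_(t <- allseq n k.+1) (good E S s t : nat))%N.
Proof.
rewrite -(cardsID S (GS E S)) leq_add // ?subset_leq_card ?subsetIr //.
rewrite -sum1_card.
apply: (@leq_trans (\sum_(v in GS E S :\: S) \sum_(s in S) \sum_(k < n)
     \sum_(t <- allseq n k.+1) (good E S s t && (last s t == v) : nat))%N).
  apply: leq_sum => v; rewrite !inE => /andP [vS /existsP [s0 /andP [s0S cn]]].
  case/connectP: cn => p pth ev; move: ev.
  case/shortenP: pth => p' pth' up' _ ev.
  have [s [t [Ss ps us al ls]]] := last_S pth' up' (P := fun z => z \in S) (introT orP (or_introl s0S)).
  rewrite ev -ls in vS *; case: t ps us al ls vS => [|y t] ps us al ls vS.
    by rewrite /= Ss in vS.
  have kn : (size t < n)%N.
    have /card_uniqP e := us.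
    have := max_card (mem (s :: y :: t)); rewrite e card_ord /=.
    by move/ltnW.
  rewrite (bigD1 s) //= (bigD1 (Ordinal kn)) //=.
  rewrite (big_rem (y :: t)) /=; last exact: (mem_allseq (y :: t)).
  by rewrite /good us al ps eqxx.
apply: (@leq_trans (\sum_v \sum_(s in S) \sum_(k < n)
     \sum_(t <- allseq n k.+1) (good E S s t && (last s t == v) : nat))%N).
  by rewrite [X in (_ <= X)%N](bigID (fun v => v \in GS E S :\: S)) /= leq_addr.
rewrite exchange_big; apply: leq_sum => s _.
rewrite exchange_big; apply: leq_sum => k _.
rewrite exchange_big; apply: leq_sum => t _.
rewrite (bigD1 (last s t)) //= eqxx andbT big1 ?addn0 // => v.
by rewrite eq_sym => /negbTE ->; rewrite andbF.
Qed.

Lemma geo (R : realFieldType) (g : R) N : 0 <= g < 1 ->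
  1 + \sum_(k < N) g ^+ k.+1 <= (1 - g)^-1.
Proof.
case/andP => g0 g1.
have e : (1 - g) * (1 + \sum_(k < N) g ^+ k.+1) = 1 - g ^+ N.+1.
  elim: N => [|N IH]; first by rewrite big_ord0 addr0 mulr1 expr1.
  by rewrite big_ord_recr /= addrA mulrDr IH (exprS g N.+1); ring.
have gp : 0 < 1 - g by rewrite subr_gt0.
rewrite -[X in _ <= X]mulr1 ler_pdivlMl // e lerBlDr lerDl; exact: exprn_ge0.
Qed.

Lemma part_a (R : realFieldType) n (Q : 'M[R]_n) (S : {set 'I_n}) g :
  Q^T = Q -> (forall i j, 0 <= Q i j <= 1) -> 0 < g < 1 ->
  (forall i : 'I_n, \sum_(j in ~: S) Q i j <= g) ->
  expected_GS Q S <= (1 - g)^-1 * (#|S|)%:R.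
Proof.
move=> QT hQ /andP [g0 g1] hS.
rewrite /expected_GS.
apply: le_trans (_ : \sum_(E : {set pr n} | E \subset vpairs n) graph_prob Q E *
   ((#|S|)%:R + \sum_(s in S) \sum_(k < n) \sum_(t <- allseq n k.+1) (good E S s t)%:R)
   <= _).
  apply: ler_sum => E Ev; apply: ler_wpM2l; first exact: gp_ge0.
  have <- : ((#|S| + \sum_(s in S) \sum_(k < n) \sum_(t <- allseq n k.+1) (good E S s t : nat))%N)%:R
     = (#|S|)%:R + \sum_(s in S) \sum_(k < n) \sum_(t <- allseq n k.+1) (good E S s t)%:R :> R.
    rewrite natrD natr_sum; congr (_ + _); apply: eq_bigr => s _.
    rewrite natr_sum; apply: eq_bigr => k _; by rewrite natr_sum.
  by rewrite ler_nat count_GS.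
under eq_bigr => E _ do rewrite mulrDr mulr_sumr.
rewrite big_split /= -mulr_suml sum_gp mul1r.
apply: le_trans (_ : (#|S|)%:R + \sum_(s in S) \sum_(k < n) g ^+ k.+1 <= _).
  rewrite lerD2l exchange_big; apply: ler_sum => s sS.
  under eq_bigr => E _ do rewrite mulr_sumr.
  rewrite exchange_big; apply: ler_sum => k _.
  under eq_bigr => E _ do rewrite mulr_sumr.
  rewrite exchange_big.
  apply: le_trans (walk_bound hQ QT (ltW g0) hS k.+1 s).
  apply: ler_sum => t _.
  rewrite /good; case: (boolP (uniq (s :: t))) => us /=; last first.
    rewrite big1 ?mulr_ge0 ?W_ge0 // => E _; by rewrite mulr0.
  case: (boolP (all _ t)) => al /=; last first.
    rewrite big1 ?mulr_ge0 ?W_ge0 // => E _; by rewrite mulr0.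
  by rewrite mul1r exp_path.
rewrite sumr_const -(mulr_natl (\sum_(k < n) g ^+ k.+1)) -[X in X + _ <= _]mulr1 -mulrDr mulrC.
apply: ler_wpM2r; first exact: ler0n.
by apply: geo; rewrite ltW.
Qed.

Lemma bern (R : realFieldType) (x : R) m : 0 <= x <= 1 ->
  (1 - x) ^+ m * (1 + m%:R * x) <= 1.
Proof.
case/andP => x0 x1; elim: m => [|m IH]; first by rewrite expr0 mul0r addr0 mulr1.
apply: le_trans IH; rewrite exprSr -mulrA; apply: ler_wpM2l.
  by apply: exprn_ge0; rewrite subr_ge0.
rewrite -natr1; have m0 : 0 <= m%:R :> R by apply: ler0n.
nra.
Qed.

Lemma final_ineq (R : realFieldType) (N M g : R) m :
  M = m%:R -> 0 <= M <= N -> (N = 0 \/ 1 <= N) -> 0 < g < 1 ->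
  (N + g * N) / (N + g * M) * M <= M + (N - M) * (1 - (1 - g / N) ^+ m).
Proof.
move=> eM /andP [M0 MN] [N0|N1] /andP [g0 g1].
  have M00 : M = 0 by apply/eqP; rewrite eq_le M0 -N0 MN.
  by rewrite N0 M00 !mulr0 !add0r; lra.
have Np : 0 < N by apply: lt_le_trans N1; exact: ltr01.
set x := g / N.
have x0 : 0 <= x by rewrite /x divr_ge0 // ltW.
have x1 : x <= 1 by rewrite /x ler_pdivrMr // mul1r; apply: le_trans N1; exact: ltW.
set p := (1 - x) ^+ m.
have hp : p * (1 + M * x) <= 1 by rewrite eM; apply: bern; rewrite x0 x1.
have gM : 0 <= g * M by apply: mulr_ge0 => //; exact: ltW.
have d0 : 0 < N + g * M by lra.
have hpd : p * (N + g * M) <= N.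
  have -> : N + g * M = N * (1 + M * x) by rewrite /x; field; rewrite gt_eqF.
  by rewrite mulrCA -[X in _ <= X]mulr1 ler_wpM2l // ltW.
have h : 0 <= (N - M) * (N - p * (N + g * M)) by apply: mulr_ge0; rewrite subr_ge0.
rewrite mulrAC ler_pdivrMr //.
nra.
Qed.

Definition Bv n (S : {set 'I_n}) (v : 'I_n) : {set pr n} :=
  [set p | ((p.1 == v) && (p.2 \in S)) || ((p.2 == v) && (p.1 \in S))].

Lemma count_lb n (E : {set pr n}) (S : {set 'I_n}) :
  (#|S| + \sum_(v in ~: S) (~~ (Bv S v :&: E == set0) : nat) <= #|GS E S|)%N.
Proof.
rewrite -(cardsID S (GS E S)).
have -> : GS E S :&: S = S.
  apply/setIidPr/subsetP => s sS; rewrite inE; apply/existsP; exists s.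
  by rewrite sS connect0.
rewrite leq_add2l -sum1_card.
rewrite [X in (_ <= X)%N](eq_bigl (fun v => (v \in ~: S) && (v \in GS E S))); last first.
  by move=> v; rewrite !inE andbC.
rewrite [X in (_ <= X)%N]big_mkcondr /=; apply: leq_sum => v.
rewrite inE => vS.

case: (boolP (Bv S v :&: E == set0)) => //= /set0Pn [p].
rewrite !inE => /andP [/orP [] /andP [/eqP e1 pS] pE].
  suff -> : [exists s in S, connect (adj E) s v] by [].
  apply/existsP; exists p.2; rewrite pS /=; apply: connect1.
  by rewrite /adj -e1 -surjective_pairing pE orbT.
suff -> : [exists s in S, connect (adj E) s v] by [].
apply/existsP; exists p.1; rewrite pS /=; apply: connect1.
by rewrite /adj -e1 -surjective_pairing pE.
Qed.

Lemma absent_prob (R : realFieldType) n (Q : 'M[R]_n) (S : {set 'I_n}) g v :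
  Q^T = Q -> 0 < g < 1 ->
  (forall i j : 'I_n, i != j -> i \in ~: S -> Q i j = g / n%:R) -> v \in ~: S ->
  \prod_(p in vpairs n) (if p \in Bv S v then 1 - Q p.1 p.2 else 1)
   <= (1 - g / n%:R) ^+ #|S|.
Proof.
move=> QT /andP [g0 g1] hb vS.
have n1 : 1 <= n%:R :> R by rewrite ler1n; apply: leq_ltn_trans (ltn_ord v).
have x0 : 0 <= g / n%:R by rewrite divr_ge0 // ?ler0n // ltW.
have x1 : g / n%:R <= 1.
  rewrite ler_pdivrMr ?mul1r; last by apply: lt_le_trans n1; exact: ltr01.
  by apply: le_trans n1; exact: ltW.
rewrite -big_mkcondr /=.
rewrite (eq_bigr (fun=> 1 - g / n%:R)); last first.
  move=> p /andP [pv]; rewrite inE in pv; rewrite inE => /orP [] /andP [/eqP e pS].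
    rewrite hb //; last by rewrite e.
    by rewrite -(inj_eq val_inj) neq_ltn pv.
  have -> : Q p.1 p.2 = Q p.2 p.1 by rewrite -[in LHS]QT mxE.
  rewrite hb //; last by rewrite e.
  by rewrite -(inj_eq val_inj) neq_ltn pv orbT.
rewrite (eq_bigl (fun p => p \in vpairs n :&: Bv S v)); last by move=> p; rewrite in_setI.
rewrite prodr_const; apply: ler_wiXn2l; first by rewrite subr_ge0.
  by rewrite lerBlDr lerDl.
have inj : {in S &, injective (fun s => oe s v)}.
  move=> s s' sS s'S; rewrite /oe.
  have sv : s != v by apply: contraTneq vS => e; rewrite -e inE negbK sS.
  have s'v : s' != v by apply: contraTneq vS => e; rewrite -e inE negbK s'S.
  case: ifP; case: ifP => _ _ [] //.
  - by move=> e _; rewrite e eqxx in sv.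
  - by move=> _ e; rewrite e eqxx in sv.
rewrite -(card_in_imset inj); apply: subset_leq_card; apply/subsetP => _ /imsetP [s sS ->].
have sv : s != v by apply: contraTneq vS => e; rewrite -e inE negbK sS.
rewrite inE oe_vpairs //= /oe; case: ifP => _; by rewrite inE /= eqxx sS ?orbT.
Qed.

Lemma part_b (R : realFieldType) n (Q : 'M[R]_n) (S : {set 'I_n}) g :
  Q^T = Q -> (forall i j, 0 <= Q i j <= 1) -> 0 < g < 1 ->
  (forall i j : 'I_n, i != j -> i \in ~: S -> Q i j = g / n%:R) ->
  expected_GS Q S >= (n%:R + g * n%:R) / (n%:R + g * (#|S|)%:R) * (#|S|)%:R.
Proof.
move=> QT hQ hg hb.
have cC : (#|~: S|)%:R = n%:R - (#|S|)%:R :> R.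
  have e := cardsC S; rewrite card_ord in e.
  have -> : n%:R = (#|S| + #|~: S|)%N%:R :> R by rewrite e.
  rewrite natrD; lra.
apply: (@le_trans _ _ ((#|S|)%:R + (n%:R - (#|S|)%:R) * (1 - (1 - g / n%:R) ^+ #|S|))).
  apply: final_ineq => //.
    have c0 : 0 <= (#|~: S|)%:R :> R by apply: ler0n.
    rewrite ler0n /=; lra.
  case: (posnP n) => [->|n0]; [by left | right].
  by rewrite ler1n.
apply: le_trans (_ : (#|S|)%:R + \sum_(v in ~: S) (1 - (1 - g / n%:R) ^+ #|S|) <= _).
  by rewrite sumr_const -(mulr_natl (1 - _)) cC.
rewrite /expected_GS.
apply: le_trans (_ : \sum_(E : {set pr n} | E \subset vpairs n) graph_prob Q E *
   ((#|S|)%:R + \sum_(v in ~: S) (~~ (Bv S v :&: E == set0))%:R) <= _); last first.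
  apply: ler_sum => E Ev; apply: ler_wpM2l; first exact: gp_ge0.
  by rewrite -natr_sum -natrD ler_nat count_lb.
under [X in _ <= X]eq_bigr => E _ do rewrite mulrDr mulr_sumr.
rewrite [X in _ <= X]big_split /= -mulr_suml sum_gp mul1r lerD2l exchange_big /=.
apply: ler_sum => v vS.
have -> : \sum_(E : {set pr n} | E \subset vpairs n)
    graph_prob Q E * (~~ (Bv S v :&: E == set0))%:R
  = \sum_(E : {set pr n} | E \subset vpairs n) graph_prob Q E -
    \sum_(E : {set pr n} | E \subset vpairs n) graph_prob Q E * (Bv S v :&: E == set0)%:R.
  rewrite -sumrB; apply: eq_bigr => E _.
  by case: (_ == _); rewrite /= ?mulr0 ?mulr1 ?subr0 ?subrr.
rewrite sum_gp sum_absent lerD2l lerN2.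
exact: absent_prob.
Qed.

Theorem lemma1 (R : realFieldType) (n : nat) (Q : 'M[R]_n) (S : {set 'I_n})
  (gamma : R) :
  Q^T = Q ->
  (forall i j, 0 <= Q i j <= 1) ->
  0 < gamma < 1 ->
  ((forall i : 'I_n, \sum_(j in ~: S) Q i j <= gamma) ->
     expected_GS Q S <= (1 - gamma)^-1 * (#|S|)%:R)
  /\
  ((forall i j : 'I_n, i != j -> i \in ~: S -> Q i j = gamma / n%:R) ->
     expected_GS Q S >= (n%:R + gamma * n%:R) / (n%:R + gamma * (#|S|)%:R) * (#|S|)%:R).
Proof.
move=> QT hQ hg; split.
  exact: part_a.
exact: part_b.
Qed.
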